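(* Let $A$ be a $\delta$-algebra, let $C_1,\dots,C_n$ be pairwise disjoint closed subsets of $\mathrm{Max}\,A$, and let $r_1,\dots,r_n\in[0,1]$. Then there exists $a\in A$ such that $\hat a(h)=r_i$ for every $i\in\{1,\dots,n\}$ and every $h\in C_i$.
   Context: An MV-algebra is an algebra $(A,\oplus,\neg,0)$ of type $(2,1,0)$ such that $(A,\oplus,0)$ is a commutative monoid, $\neg\neg a=a$, $a\oplus\neg 0=\neg 0$, and $\neg(\neg a\oplus b)\oplus b=\neg(\neg b\oplus a)\oplus a$. Derived operations: $1:=\neg 0$, $a\odot b:=\neg(\neg a\oplus\neg b)$, $a\ominus b:=a\odot\neg b$, $a\vee b:=\neg(\neg a\oplus b)\oplus b$ (join of a lattice order $\le$), $d(a,b):=(a\ominus b)\oplus(b\ominus a)$. Let $\mathcal{L}=\{\delta,\oplus,\neg,0\}$ of type $(\omega,2,1,0)$; $\tfrac12(x):=\delta(x,0,0,\dots)$. A $\delta$-algebra is an $\mathcal{L}$-algebra whose MV-reduct is an MV-algebra and satisfying for all $x,y,\vec x,\vec y$: (i) $d(\delta(\vec x),\delta(x_1,0,0,\dots))=\delta(0,x_2,x_3,\dots)$; (ii) $\tfrac12(\delta(\vec x))=\delta(\tfrac12(x_1),\tfrac12(x_2),\dots)$; (iii) $\delta(x,x,\dots)=x$; (iv) $\delta(0,\vec x)=\tfrac12(\delta(\vec x))$; (v) $\delta(\vec x)\le\delta(x_1\oplus y_1,x_2\oplus y_2,\dots)$; (vi) $\tfrac12(x\ominus y)=\tfrac12(x)\ominus\tfrac12(y)$.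 $[0,1]$ is the standard $\delta$-algebra with $x\oplus y=\min\{1,x+y\}$, $\neg x=1-x$, $\delta(\vec x)=\sum_i x_i/2^i$. For a $\delta$-algebra $A$, $\mathrm{Max}\,A$ is the set of MV-algebra homomorphisms $A\to[0,1]$ with the subspace topology of the product space $[0,1]^A$ (a compact Hausdorff space). For $a\in A$, $\hat a\colon\mathrm{Max}\,A\to[0,1]$ is the continuous map $\hat a(h):=h(a)$. *)

(* Defs.v *)
From Stdlib Require Import Reals List.
Open Scope R_scope.

(* Signature of L = {delta, oplus, neg, 0}; delta takes a sequence
   x : nat -> A, with x 0 playing the role of x_1. *)
Record deltaSig := DeltaSig {
  car :> Type;
  op : car -> car -> car;
  ng : car -> car;
  zr : car;
  dl : (nat -> car) -> car
}.

Section Derived.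
Variable A : deltaSig.
Definition one : A := ng A (zr A).
Definition odot (a b : A) : A := ng A (op A (ng A a) (ng A b)).
Definition ominus (a b : A) : A := odot a (ng A b).
Definition join (a b : A) : A := op A (ng A (op A (ng A a) b)) b.
Definition mle (a b : A) : Prop := join a b = b.
Definition dist (a b : A) : A := op A (ominus a b) (ominus b a).
Definition half (x : A) : A := dl A (fun k => match k with O => x | _ => zr A end).

Definition is_MV_algebra : Prop :=
  (forall a b c : A, op A a (op A b c) = op A (op A a b) c) /\
  (forall a b : A, op A a b = op A b a) /\
  (forall a : A, op A a (zr A) = a) /\
  (forall a : A, ng A (ng A a) = a) /\
  (forall a : A, op A a (ng A (zr A)) = ng A (zr A)) /\
  (forall a b : A, op A (ng A (op A (ng A a) b)) b = op A (ng A (op A (ng A b) a)) a).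

Definition is_delta_algebra : Prop :=
  is_MV_algebra /\
  (* (i) *)
  (forall x : nat -> A,
     dist (dl A x) (dl A (fun k => match k with O => x O | _ => zr A end))
     = dl A (fun k => match k with O => zr A | _ => x k end)) /\
  (* (ii) *)
  (forall x : nat -> A, half (dl A x) = dl A (fun k => half (x k))) /\
  (* (iii) *)
  (forall x : A, dl A (fun _ => x) = x) /\
  (* (iv) *)
  (forall x : nat -> A,
     dl A (fun k => match k with O => zr A | S j => x j end) = half (dl A x)) /\
  (* (v) *)
  (forall x y : nat -> A, mle (dl A x) (dl A (fun k => op A (x k) (y k)))) /\
  (* (vi) *)
  (forall x y : A, half (ominus x y) = ominus (half x) (half y)).

(* Max A: MV-algebra homomorphisms A -> [0,1] (standard MV-algebra). *)
Definition in_Max (h : A -> R) : Prop :=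
  (forall a, 0 <= h a <= 1) /\
  h (zr A) = 0 /\
  (forall a, h (ng A a) = 1 - h a) /\
  (forall a b, h (op A a b) = Rmin 1 (h a + h b)).

(* Closed subsets of Max A in the subspace topology of the product
   topology on [0,1]^A: C ⊆ Max A and every point of Max A outside C
   has a basic open neighbourhood (finitely many coordinates, radius
   eps) disjoint from C. *)
Definition closed_in_Max (C : (A -> R) -> Prop) : Prop :=
  (forall h, C h -> in_Max h) /\
  (forall h, in_Max h -> ~ C h ->
     exists (l : list A) (eps : R), 0 < eps /\
       forall h', in_Max h' ->
         (forall a, In a l -> Rabs (h' a - h a) < eps) -> ~ C h').
End Derived.

(* Main.v *)
Require Import Defs.
From Stdlib Require Import Reals.
From Stdlib Require Import List Lra Lia Classical FunctionalExtensionality IndefiniteDescription.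
Open Scope R_scope.
Set Warnings "-notation-overridden,-ambiguous-paths,-notation-incompatible-prefix,-redundant-canonical-projection".
From HB Require structures.
From mathcomp Require all_boot all_order all_algebra all_classical all_reals all_analysis Rstruct Rstruct_topology.
Module Cpt.
Import HB.structures.
Import all_boot all_order all_algebra all_classical all_reals all_analysis Rstruct Rstruct_topology.
Import function_spaces.ArrowAsProduct numFieldNormedType.Exports.
Import Order.TTheory GRing.Theory Num.Theory.
Local Open Scope classical_set_scope.

Lemma open_ball_R (c e : R) : open [set y : R | Rlt (Rabs (Rminus y c)) e].
Proof.
have -> : [set y : R | Rlt (Rabs (Rminus y c)) e] = ball c e.
  apply/seteqP; split => y /=.
  - rewrite /ball /= Rabs_minus_sym => H; apply/RltP; exact H.
  - rewrite /ball /= => /RltP H; rewrite Rabs_minus_sym; exact H.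
exact: (@ball_open R R^o c e).
Qed.

Lemma inInP (T : eqType) (x : T) (s : seq T) : reflect (List.In x s) (x \in s).
Proof.
elim: s => [|y s IH] /=; first by apply: ReflectF.
rewrite in_cons; apply: (iffP orP).
- by case=> [/eqP ->|/IH]; [left|right].
- by case=> [->|/IH]; [left; apply/eqP|right].
Qed.

Definition PA (A : Type) := forall i : {classic A}, (fun _ => R) i.
HB.instance Definition _ (A : Type) := Topological.copy (PA A) (prod_topology (fun _ : {classic A} => R)).
HB.instance Definition _ (A : Type) := isPointed.Build (PA A) (fun _ => 0%R).

Lemma cKc (A : Type) : @cover_compact (PA A) [set f | forall i : {classic A}, `[0%R, 1%R] (f i)].
Proof.
rewrite -compact_cover.
exact: (@tychonoff {classic A} (fun _ => R) (fun _ => `[0%R, 1%R]) (fun _ => @segment_compact R 0%R 1%R)).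
Qed.

Lemma open_nbhd (A : Type) (g : A -> R) (l : list A) (e : R) :
  @open (PA A) [set h : PA A | forall a, List.In a l -> Rlt (Rabs (Rminus (h a) (g a))) e].
Proof.
elim: l => [|a l IH].
  have -> : [set h : PA A | forall a, List.In a (@nil A) -> Rlt (Rabs (Rminus (h a) (g a))) e] = setT.
    by apply/seteqP; split => h //= _ a [].
  exact: openT.
have -> : [set h : PA A | forall b, List.In b (a :: l) -> Rlt (Rabs (Rminus (h b) (g b))) e]
  = ((fun h : PA A => h a) @^-1` [set y : R | Rlt (Rabs (Rminus y (g a))) e]) `&`
    [set h : PA A | forall b, List.In b l -> Rlt (Rabs (Rminus (h b) (g b))) e].
  apply/seteqP; split => h /=.
  - move=> H; split; first by apply: H; left.
    by move=> b Hb; apply: H; right.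
  - by case=> H1 H2 b [<-|Hb]; [exact: H1|exact: H2].
apply: openI => //.
apply: open_comp; last exact: open_ball_R.
move=> x _; exact: (@proj_continuous {classic A} (fun _ => R) a x).
Qed.

Lemma fin_cover (A : Type) (l : (A -> R) -> list A) (e : (A -> R) -> R) :
  (forall f, Rlt 0 (e f)) ->
  exists L : list (A -> R),
    (forall g, List.In g L -> forall a, Rle 0 (g a) /\ Rle (g a) 1) /\
    (forall f : A -> R, (forall a, Rle 0 (f a) /\ Rle (f a) 1) ->
       exists g, List.In g L /\ forall a, List.In a (l g) -> Rlt (Rabs (Rminus (f a) (g a))) (e g)).
Proof.
move=> epos.
pose J := {classic (A -> R)}.
pose F : J -> set (PA A) := fun g => [set h : PA A | forall a, List.In a (l g) -> Rlt (Rabs (Rminus (h a) (g a))) (e g)].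
pose D : set J := [set f | forall i : {classic A}, `[0%R, 1%R] (f i)].
have [] := @cKc A J D F.
- move=> g _; exact: (open_nbhd A g (l g) (e g)).
- move=> h Dh; exists h => //= a _.
  rewrite /Rminus Rplus_opp_r Rabs_R0; exact: epos.
move=> D' sub cov.
exists (finmap.enum_fset D'); split.
- move=> g /inInP /sub; rewrite inE /D /= => Dg a.
  have := Dg a; rewrite /= in_itv /= => /andP [/RleP H1 /RleP H2]; by split.
- move=> f Hf.
  have Df : D f.
    move=> a /=; rewrite in_itv /=; apply/andP; split; apply/RleP; apply Hf.
  have [g Dg Fg] := cov f Df.
  exists g; split => //; apply/inInP; exact: Dg.
Qed.
End Cpt.

Open Scope R_scope.


Ltac rcase := unfold Rmin, Rmax, Rabs in *;
  repeat match goal with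
  | |- context [Rle_dec ?a ?b] => destruct (Rle_dec a b)
  | H : context [Rle_dec ?a ?b] |- _ => destruct (Rle_dec a b)
  | |- context [Rcase_abs ?a] => destruct (Rcase_abs a)
  | H : context [Rcase_abs ?a] |- _ => destruct (Rcase_abs a)
  end; lra.

Section Alg.
Variable A : deltaSig.
Hypothesis HA : is_delta_algebra A.

Definition meet (a b : A) : A := ng A (join A (ng A a) (ng A b)).

Lemma MVax : is_MV_algebra A. Proof. destruct HA; tauto. Qed.

Lemma ngng (a : A) : ng A (ng A a) = a.
Proof. destruct MVax as (_&_&_&H&_); apply H. Qed.
Lemma opC (a b : A) : op A a b = op A b a.
Proof. destruct MVax as (_&H&_); apply H. Qed.
Lemma op0 (a : A) : op A a (zr A) = a.
Proof. destruct MVax as (_&_&H&_); apply H. Qed.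
Lemma op0l (a : A) : op A (zr A) a = a.
Proof. rewrite opC; apply op0. Qed.

Lemma ominus_one_ng (x : A) : ominus A (one A) (ng A x) = x.
Proof.
  unfold ominus, odot, one. rewrite !ngng. rewrite op0l. apply ngng.
Qed.

Section H.
Variable h : A -> R.
Hypothesis Hh : in_Max A h.

Lemma hr a : 0 <= h a <= 1. Proof. apply Hh. Qed.
Lemma hz : h (zr A) = 0. Proof. apply Hh. Qed.
Lemma hn a : h (ng A a) = 1 - h a. Proof. apply Hh. Qed.
Lemma ho a b : h (op A a b) = Rmin 1 (h a + h b). Proof. apply Hh. Qed.
Lemma hone : h (one A) = 1. Proof. unfold one. rewrite hn, hz. lra. Qed.
Lemma hodot a b : h (odot A a b) = Rmax 0 (h a + h b - 1).
Proof. unfold odot. rewrite hn, ho, !hn. pose proof (hr a); pose proof (hr b). rcase. Qed.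
Lemma hominus a b : h (ominus A a b) = Rmax 0 (h a - h b).
Proof. unfold ominus. rewrite hodot, hn. f_equal. lra. Qed.
Lemma hjoin a b : h (join A a b) = Rmax (h a) (h b).
Proof. unfold join. rewrite ho, hn, ho, hn. pose proof (hr a); pose proof (hr b). rcase. Qed.
Lemma hmeet a b : h (meet a b) = Rmin (h a) (h b).
Proof. unfold meet. rewrite hn, hjoin, !hn. pose proof (hr a); pose proof (hr b). rcase. Qed.
Lemma hdist a b : h (Defs.dist A a b) = Rabs (h a - h b).
Proof. unfold Defs.dist. rewrite ho, !hominus. pose proof (hr a); pose proof (hr b). rcase. Qed.
Lemma hmle a b : mle A a b -> h a <= h b.
Proof. unfold mle. intro E. pose proof (hjoin a b) as E2. rewrite E in E2. rewrite E2. rcase. Qed.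

Lemma hhalf_aux y : h y = 0 \/ h (half A y) = h y / 2.
Proof.
  destruct HA as (_&Hi&_&Hiii&Hiv&_).
  pose proof (Hi (fun _ => y)) as E. cbv beta in E.
  pose proof (Hiv (fun _ => y)) as E2. cbv beta in E2.
  rewrite Hiii in E, E2. rewrite E2 in E.
  change (dl A (fun k => match k with O => y | S _ => zr A end)) with (half A y) in E.
  apply (f_equal h) in E. rewrite hdist in E.
  pose proof (hr (half A y)). rcase.
Qed.

Lemma hhalf x : h (half A x) = h x / 2.
Proof.
  destruct HA as (_&_&_&_&_&_&Hvi).
  pose proof (Hvi (one A) (ng A x)) as E. rewrite ominus_one_ng in E.
  apply (f_equal h) in E. rewrite hominus in E.
  assert (H1 : h (half A (one A)) = 1/2).
  { destruct (hhalf_aux (one A)) as [H|H]; rewrite hone in *; lra. }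
  rewrite H1 in E.
  destruct (Req_dec (h x) 0) as [Z|NZ].
  - assert (H2 : h (half A (ng A x)) = 1/2).
    { destruct (hhalf_aux (ng A x)) as [H|H]; rewrite hn in *; lra. }
    rewrite H2 in E. rewrite E, Z. rcase.
  - destruct (hhalf_aux x); lra.
Qed.

Lemma hdl (x : nat -> A) : h (dl A x) = h (x O) / 2 + h (dl A (fun k => x (S k))) / 2.
Proof.
  destruct HA as (_&Hi&_&_&Hiv&Hv&_).
  pose proof (Hi x) as E.
  change (dl A (fun k => match k with O => x O | _ => zr A end)) with (half A (x O)) in E.
  assert (F : (fun k => match k with O => zr A | S _ => x k end)
             = (fun k => match k with O => zr A | S j => (fun j => x (S j)) j end)).
  { apply functional_extensionality; intros [|k]; reflexivity. }
  rewrite F, Hiv in E.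
  apply (f_equal h) in E. rewrite hdist, !hhalf in E.
  pose proof (Hv (fun k => match k with O => x O | _ => zr A end)
                 (fun k => match k with O => zr A | _ => x k end)) as M.
  assert (G : (fun k => op A (match k with O => x O | _ => zr A end)
                            (match k with O => zr A | _ => x k end)) = x).
  { apply functional_extensionality; intros [|k]. apply op0. apply op0l. }
  cbv beta in M. rewrite G in M.
  change (dl A (fun k => match k with O => x O | _ => zr A end)) with (half A (x O)) in M.
  apply hmle in M. rewrite hhalf in M.
  pose proof (hr (dl A (fun k => x (S k)))). rcase.
Qed.
End H.

Section Const.
Variable r : R.
Hypothesis Hr : 0 <= r <= 1.

Fixpoint rs (k : nat) : R :=
  match k with
  | O => r
  | S k => if Rle_dec (1/2) (rs k) then 2 * rs k - 1 else 2 * rs k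
  end.
Definition dig (k : nat) : A := if Rle_dec (1/2) (rs k) then one A else zr A.
Definition ck (k : nat) : A := dl A (fun j => dig (k + j)).

Lemma rs_range k : 0 <= rs k <= 1.
Proof. induction k; simpl. lra. destruct (Rle_dec (1/2) (rs k)); lra. Qed.

Lemma ck_val h : in_Max A h -> h (ck O) = r.
Proof.
  intro Hh.
  set (e := fun k => h (ck k) - rs k).
  assert (step : forall k, e k = e (S k) / 2).
  { intro k. unfold e. unfold ck at 1. rewrite (hdl h Hh).
    assert (Fq : (fun k0 => dig (k + S k0)) = (fun j => dig (S k + j))).
    { apply functional_extensionality; intro j. f_equal. lia. }
    rewrite Fq. fold (ck (S k)). rewrite Nat.add_0_r. unfold dig. simpl rs.
    destruct (Rle_dec (1/2) (rs k)); [rewrite (hone h Hh)|rewrite (hz h Hh)]; lra. }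
  assert (bd : forall k, Rabs (e k) <= 1).
  { intro k. unfold e. pose proof (hr h Hh (ck k)). pose proof (rs_range k). rcase. }
  assert (pw : forall k, Rabs (e O) = Rabs (e k) * (/2) ^ k).
  { induction k. simpl. lra. rewrite IHk, (step k). simpl pow.
    unfold Rdiv. rewrite Rabs_mult. rewrite (Rabs_right (/2)) by lra. field. }
  destruct (Req_dec (e O) 0) as [Z|NZ].
  - unfold e in Z. simpl rs in Z. lra.
  - exfalso. assert (P : 0 < Rabs (e O)) by (apply Rabs_pos_lt; exact NZ).
    destruct (pow_lt_1_zero (/2) ltac:(rewrite Rabs_right; lra) (Rabs (e O)) P) as [N HN].
    specialize (HN N (le_n N)). rewrite Rabs_right in HN by (apply Rle_ge, pow_le; lra).
    pose proof (pw N). pose proof (bd N). pose proof (pow_le (/2) N ltac:(lra)). nra.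
Qed.
End Const.

Lemma const_ex : exists cst : R -> A, forall r, 0 <= r <= 1 -> forall h, in_Max A h -> h (cst r) = r.
Proof.
  destruct (functional_choice (fun (r : R) (c : A) => 0 <= r <= 1 -> forall h, in_Max A h -> h c = r)) as [f Hf].
  - intro r. destruct (classic (0 <= r <= 1)) as [H|H].
    + exists (ck r O). intros _ h Hh. apply ck_val; assumption.
    + exists (zr A). intro; contradiction.
  - exists f; exact Hf.
Qed.
End Alg.


Section Ury.
Variable A : deltaSig.
Hypothesis HA : is_delta_algebra A.
Variable cst : R -> A.
Hypothesis Hcst : forall r, 0 <= r <= 1 -> forall h, in_Max A h -> h (cst r) = r.

Fixpoint bump (g : A -> R) (l : list A) (eps : R) : A :=
  match l with
  | nil => one A
  | a :: l => meet A (ominus A (cst eps) (Defs.dist A a (cst (g a)))) (bump g l eps)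
  end.

Lemma bump_lo h g l eps : in_Max A h -> in_Max A g -> 0 < eps <= 1 ->
  (forall a, In a l -> Rabs (h a - g a) < eps / 2) -> eps / 2 <= h (bump g l eps).
Proof.
  intros Hh Hg He. induction l as [|b l IH]; intro Hl; simpl.
  - rewrite (hone A h Hh). lra.
  - rewrite (hmeet A h Hh), (hominus A h Hh), (hdist A h Hh).
    rewrite (Hcst eps ltac:(lra) h Hh), (Hcst (g b) (hr A g Hg b) h Hh).
    assert (IH' := IH (fun a H => Hl a (or_intror H))).
    assert (Hb := Hl b (or_introl eq_refl)). rcase.
Qed.

Lemma bump_zero h g l eps : in_Max A h -> in_Max A g -> 0 < eps <= 1 ->
  forall a, In a l -> eps <= Rabs (h a - g a) -> h (bump g l eps) = 0.
Proof.
  intros Hh Hg He. induction l as [|b l IH]; intros a Hin Ha; simpl.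
  - destruct Hin.
  - rewrite (hmeet A h Hh), (hominus A h Hh), (hdist A h Hh).
    rewrite (Hcst eps ltac:(lra) h Hh), (Hcst (g b) (hr A g Hg b) h Hh).
    pose proof (hr A h Hh (bump g l eps)).
    destruct Hin as [<-|Hin].
    + rcase.
    + rewrite (IH a Hin Ha). rcase.
Qed.

Fixpoint mult (k : nat) (b : A) : A :=
  match k with O => zr A | S k => op A b (mult k b) end.

Lemma hmult h k b : in_Max A h -> h (mult k b) = Rmin 1 (INR k * h b).
Proof.
  intro Hh. induction k; simpl mult.
  - rewrite (hz A h Hh). simpl INR. rewrite Rmult_0_l. rcase.
  - rewrite (ho A h Hh), IHk, S_INR, Rmult_plus_distr_r, Rmult_1_l.
    pose proof (hr A h Hh b). pose proof (pos_INR k).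
    assert (0 <= INR k * h b) by (apply Rmult_le_pos; lra).
    rcase.
Qed.

Lemma local_bump (C D : (A -> R) -> Prop) (HC : closed_in_Max A C)
  (HD : forall h, D h -> in_Max A h) (Hdj : forall h, C h -> D h -> False) g (Dg : D g) :
  exists l e b, 0 < e /\ (forall h, C h -> h b = 0) /\
    (forall h, in_Max A h -> (forall a, In a l -> Rabs (h a - g a) < e) -> h b = 1).
Proof.
  destruct HC as [Csub Cnb].
  destruct (Cnb g (HD g Dg) (fun Cg => Hdj g Cg Dg)) as (l & eps0 & Heps0 & N).
  set (eps := Rmin eps0 1).
  assert (He : 0 < eps <= 1) by (unfold eps; rcase).
  destruct (INR_unbounded (2 / eps)) as [k Hk].
  assert (Hk2 : INR k * eps > 2).
  { assert (E : 2 / eps * eps = 2) by (field; lra).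
    assert (2 / eps * eps < INR k * eps) by (apply Rmult_lt_compat_r; lra). lra. }
  exists l, (eps / 2), (mult k (bump g l eps)). split; [lra|split].
  - intros h Ch. pose proof (Csub h Ch) as Hh.
    assert (Ex : exists a, In a l /\ eps <= Rabs (h a - g a)).
    { apply NNPP. intro Hn. apply (N h Hh); [|exact Ch].
      intros a Ha. apply Rnot_le_lt. intro Hle. apply Hn. exists a. split; auto.
      unfold eps. rcase. }
    destruct Ex as (a & Ha & Hle).
    rewrite (hmult h k _ Hh), (bump_zero h g l eps Hh (HD g Dg) He a Ha Hle).
    rewrite Rmult_0_r. rcase.
  - intros h Hh Hl.
    pose proof (bump_lo h g l eps Hh (HD g Dg) He Hl).
    rewrite (hmult h k _ Hh). pose proof (pos_INR k).
    assert (INR k * h (bump g l eps) >= 1) by nra.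
    rcase.
Qed.

Lemma outside_max (f : A -> R) : (forall a, 0 <= f a <= 1) -> ~ in_Max A f ->
  exists l e, 0 < e /\ forall h, in_Max A h -> (forall a, In a l -> Rabs (h a - f a) < e) -> False.
Proof.
  intros Hf Hn.
  destruct (classic (f (zr A) = 0)) as [Z|Z].
  2:{ exists (zr A :: nil), (Rabs (f (zr A))). split. apply Rabs_pos_lt; exact Z.
      intros h Hh Hl. specialize (Hl (zr A) (or_introl eq_refl)). rewrite (hz A h Hh) in Hl. rcase. }
  destruct (classic (forall a, f (ng A a) = 1 - f a)) as [Ng|Ng].
  2:{ apply not_all_ex_not in Ng. destruct Ng as [a Ha].
      exists (a :: ng A a :: nil), (Rabs (f (ng A a) - (1 - f a)) / 2). split.
      { assert (0 < Rabs (f (ng A a) - (1 - f a))) by (apply Rabs_pos_lt; lra). lra. }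
      intros h Hh Hl. pose proof (Hl a ltac:(simpl; auto)) as H1.
      pose proof (Hl (ng A a) ltac:(simpl; auto)) as H2.
      rewrite (hn A h Hh) in H2. rcase. }
  destruct (classic (forall a b, f (op A a b) = Rmin 1 (f a + f b))) as [Op|Op].
  2:{ apply not_all_ex_not in Op. destruct Op as [a Ha].
      apply not_all_ex_not in Ha. destruct Ha as [b Hb].
      exists (a :: b :: op A a b :: nil), (Rabs (f (op A a b) - Rmin 1 (f a + f b)) / 3). split.
      { assert (0 < Rabs (f (op A a b) - Rmin 1 (f a + f b))) by (apply Rabs_pos_lt; lra). lra. }
      intros h Hh Hl. pose proof (Hl a ltac:(simpl; auto)) as H1.
      pose proof (Hl b ltac:(simpl; auto)) as H2.
      pose proof (Hl (op A a b) ltac:(simpl; auto)) as H3.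
      rewrite (ho A h Hh) in H3. rcase. }
  exfalso. apply Hn. repeat split; auto; apply Hf.
Qed.

Lemma urysohn (C D : (A -> R) -> Prop) (HC : closed_in_Max A C) (HD : closed_in_Max A D)
  (Hdj : forall h, C h -> D h -> False) :
  exists a, (forall h, C h -> h a = 0) /\ (forall h, D h -> h a = 1).
Proof.
  destruct (functional_choice (fun (f : A -> R) (p : list A * R) => 0 < snd p /\
     ((forall a, 0 <= f a <= 1) -> exists b, (forall h, C h -> h b = 0) /\
        (forall h, D h -> (forall a, In a (fst p) -> Rabs (h a - f a) < snd p) -> h b = 1))))
    as [P HP].
  { intro f. destruct (classic (forall a, 0 <= f a <= 1)) as [Kf|Kf].
    2:{ exists (nil, 1). simpl. split. lra. intro; contradiction. }
    destruct (classic (D f)) as [Df|Df].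
    { destruct (local_bump C D HC (proj1 HD) Hdj f Df) as (l & e & b & He & H1 & H2).
      exists (l, e). simpl. split; auto. intros _. exists b. split; auto.
      intros h Dh Hl. apply H2; auto. apply (proj1 HD); auto. }
    destruct (classic (in_Max A f)) as [Mf|Mf].
    { destruct (proj2 HD f Mf Df) as (l & eps & He & N).
      exists (l, eps). simpl. split; auto. intros _. exists (zr A). split.
      - intros h Ch. apply (hz A h). apply (proj1 HC); auto.
      - intros h Dh Hl. exfalso. apply (N h (proj1 HD h Dh) Hl Dh). }
    destruct (outside_max f Kf Mf) as (l & e & He & N).
    exists (l, e). simpl. split; auto. intros _. exists (zr A). split.
    - intros h Ch. apply (hz A h). apply (proj1 HC); auto.
    - intros h Dh Hl. exfalso. apply (N h (proj1 HD h Dh) Hl). }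
  destruct (Cpt.fin_cover A (fun f => fst (P f)) (fun f => snd (P f)) (fun f => proj1 (HP f)))
    as (L & HL1 & HL2).
  assert (comb : forall L', (forall g, In g L' -> forall a, 0 <= g a <= 1) ->
    exists a, (forall h, C h -> h a = 0) /\ (forall h, D h ->
      (exists g, In g L' /\ forall b, In b (fst (P g)) -> Rabs (h b - g b) < snd (P g)) -> h a = 1)).
  { induction L' as [|g L' IH]; intro HK.
    - exists (zr A). split. intros h Ch. apply (hz A h). apply (proj1 HC); auto.
      intros h _ [g [[] _]].
    - destruct IH as (a & Ha1 & Ha2). { intros g' Hg'. apply HK. right; auto. }
      destruct (proj2 (HP g) (HK g (or_introl eq_refl))) as (b & Hb1 & Hb2).
      exists (join A b a). split.
      + intros h Ch. pose proof (proj1 HC h Ch) as Hh. rewrite (hjoin A h Hh), Ha1, Hb1; auto. rcase.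
      + intros h Dh [g' [Hin Hw]]. pose proof (proj1 HD h Dh) as Hh. rewrite (hjoin A h Hh).
        pose proof (hr A h Hh a). pose proof (hr A h Hh b).
        destruct Hin as [<-|Hin].
        * rewrite (Hb2 h Dh Hw). rcase.
        * rewrite (Ha2 h Dh (ex_intro _ g' (conj Hin Hw))). rcase. }
  destruct (comb L HL1) as (a & Ha1 & Ha2).
  exists a. split; auto.
  intros h Dh. apply Ha2; auto.
  apply HL2. apply (hr A h (proj1 HD h Dh)).
Qed.
End Ury.

Theorem mainTheorem5 (A : deltaSig) (HA : is_delta_algebra A)
  (n : nat) (C : nat -> (A -> R) -> Prop) (r : nat -> R)
  (HC : forall i, (i < n)%nat -> closed_in_Max A (C i))
  (Hdisj : forall i j h, (i < n)%nat -> (j < n)%nat -> i <> j ->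
             C i h -> C j h -> False)
  (Hr : forall i, (i < n)%nat -> 0 <= r i <= 1) :
  exists a : A, forall i, (i < n)%nat -> forall h, C i h -> h a = r i.
Proof.
  destruct (const_ex A HA) as [cst Hcst].
  destruct (functional_choice (fun (p : nat * nat) (a : A) =>
     (fst p < n)%nat -> (snd p < n)%nat -> fst p <> snd p ->
     (forall h, C (snd p) h -> h a = 0) /\ (forall h, C (fst p) h -> h a = 1))) as [u Hu].
  { intros [i j]. simpl.
    destruct (classic ((i < n)%nat /\ (j < n)%nat /\ i <> j)) as [(Hi & Hj & Hij)|Hn].
    - destruct (urysohn A cst Hcst (C j) (C i) (HC j Hj) (HC i Hi)
         (fun h Cj Ci => Hdisj i j h Hi Hj Hij Ci Cj)) as [a Ha].
      exists a. intros; exact Ha.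
    - exists (zr A). intros; exfalso; tauto. }
  set (E := fix E (i m : nat) : A := match m with
        | O => one A
        | S m' => if Nat.eq_dec m' i then E i m' else odot A (u (i, m')) (E i m') end).
  assert (E1 : forall i h, (i < n)%nat -> C i h -> forall m, (m <= n)%nat -> h (E i m) = 1).
  { intros i h Hi Ch. pose proof (proj1 (HC i Hi) h Ch) as Hh.
    induction m as [|m IH]; intro Hm; simpl.
    - apply (hone A h Hh).
    - destruct (Nat.eq_dec m i) as [->|Hmi]. apply IH; lia.
      rewrite (hodot A h Hh), IH by lia.
      rewrite (proj2 (Hu (i, m) Hi ltac:(simpl; lia) ltac:(simpl; auto))) by exact Ch.
      rcase. }
  assert (E0 : forall i j h, (i < n)%nat -> (j < n)%nat -> i <> j -> C j h ->
     forall m, (j < m)%nat -> (m <= n)%nat -> h (E i m) = 0).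
  { intros i j h Hi Hj Hij Ch. pose proof (proj1 (HC j Hj) h Ch) as Hh.
    induction m as [|m IH]; intros Hm1 Hm2; [lia|]. simpl.
    destruct (Nat.eq_dec m i) as [->|Hmi].
    - apply IH; [|lia]. destruct (Nat.eq_dec j i); [congruence|lia].
    - rewrite (hodot A h Hh). pose proof (hr A h Hh (u (i, m))). pose proof (hr A h Hh (E i m)).
      destruct (Nat.eq_dec m j) as [->|Hmj].
      + rewrite (proj1 (Hu (i, j) Hi Hj Hij)) by exact Ch. rcase.
      + rewrite IH by lia. rcase. }
  set (F := fix F (m : nat) : A := match m with
        | O => zr A
        | S m' => op A (odot A (E m' n) (cst (r m'))) (F m') end).
  exists (F n). intros i Hi h Ch.
  pose proof (proj1 (HC i Hi) h Ch) as Hh.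
  assert (key : forall m, (m <= n)%nat -> h (F m) = if Compare_dec.lt_dec i m then r i else 0).
  { induction m as [|m IH]; intro Hm; simpl.
    - apply (hz A h Hh).
    - rewrite (ho A h Hh), (hodot A h Hh), IH by lia.
      rewrite (Hcst (r m) (Hr m ltac:(lia)) h Hh).
      pose proof (Hr i Hi). pose proof (Hr m ltac:(lia)).
      destruct (Nat.eq_dec m i) as [->|Hmi].
      + rewrite (E1 i h Hi Ch n (le_n n)).
        destruct (Compare_dec.lt_dec i i); [lia|]. destruct (Compare_dec.lt_dec i (S i)); [|lia]. rcase.
      + rewrite (E0 m i h ltac:(lia) Hi Hmi Ch n Hi (le_n n)).
        destruct (Compare_dec.lt_dec i m); destruct (Compare_dec.lt_dec i (S m)); try lia; rcase. }
  rewrite key by lia. destruct (Compare_dec.lt_dec i n); [reflexivity|lia].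
Qed.
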